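(* Let $\mathcal A\subseteq E^\infty$, let $V\subseteq E$ be a block subspace, $\vec v$ a finite block sequence and $T$ a $(V,\vec v)$-rule, and suppose that for every block subspace $W\subseteq V$, player I has no strategy in $B^T_W(\vec v)$ to play in $\mathcal A$. (a) If $|\vec v|$ is odd, then there is a block subspace $X\subseteq V$ such that for every block subspace $Y\subseteq X$ there is $x\in Y$ with $\vec v\,\hat{}\,x\in T$ such that for every block subspace $W\subseteq X$, player I has no strategy in $B^T_W(\vec v\,\hat{}\,x)$ to play in $\mathcal A$. (b) If $|\vec v|$ is even, then there is a block subspace $X\subseteq V$ with $\vec v\,\hat{}\,x\in T$ for all non-zero $x\in X$, such that for every non-zero $x\in X$ and every block subspace $W\subseteq X$, player I has no strategy in $B^T_W(\vec v\,\hat{}\,x)$ to play in $\mathcal A$.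
   Context: Fix a countable field $\mathfrak F$ and let $E$ be the countable-dimensional $\mathfrak F$-vector space with basis $(e_n)$. For non-zero $x=\sum a_ne_n$, ${\rm supp}\,x=\{n:a_n\neq0\}$. A block sequence is a sequence of non-zero vectors with $\max{\rm supp}\,x_n<\min{\rm supp}\,x_{n+1}$. ''Subspace'' means an infinite-dimensional block subspace of $E$; vectors played are non-zero. For a subspace $X$, $X[k]=\{x\in X\setminus\{0\}:k<\min{\rm supp}\,x\}$. $E^\infty=E^{\mathbb N}$ with the product of discrete topologies; $E^{<\infty}$ is the set of finite block sequences; $\hat{}$ is concatenation; $T_{\vec x}=\{\vec y:\vec x\,\hat{}\,\vec y\in T\}$. Game $B_V(\vec v)$: if $|\vec v|$ is even: II plays a subspace $Z_0\subseteq V$; I plays non-zero $x_0\in Z_0$ and $n_0\in\mathbb N$; II plays non-zero $y_0\in V[n_0]$ and a subspace $Z_1\subseteq V$; I plays $x_1\in Z_1$, $n_1$; II plays $y_1\in V[n_1]$, $Z_2$; etc.; outcome $\vec v\,\hat{}\,(x_0,y_0,x_1,y_1,\dots)$. If $|\vec v|$ is odd: I plays $n_0$; II plays $y_0\in V[n_0]$ and $Z_0\subseteq V$; I plays $x_0\in Z_0$ and $n_1$; II plays $y_1\in V[n_1]$ and $Z_1$; etc.; outcome $\vec v\,\hat{}\,(y_0,x_0,y_1,x_1,\dots)$. A $(V,\vec v)$-rule is a set $T\subseteq E^{<\infty}$ with $\vec v\in T$ such that: (i) if $\vec y\in T$, $|\vec y|$ odd, then for every subspace $Z\subseteq V$ there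 is $z\in Z$ with $\vec y\,\hat{}\,z\in T$; (ii) if $\vec y\in T$, $|\vec y|$ even, then there is $n$ with $\vec y\,\hat{}\,z\in T$ for all $z\in V[n]$. The $T$-induced subgame $B^T_V(\vec v)$ is played as $B_V(\vec v)$ with the additional requirement that every position, i.e. the finite sequence of vectors played so far listed in the order they appear in the outcome, belongs to $T_{\vec v}$. A strategy to play in $\mathcal A$ is one all of whose outcomes lie in $\mathcal A$. *)

(* Defs.v *)
From HB Require Import structures.
From mathcomp Require Import all_boot all_order all_algebra.
Set Implicit Arguments. Unset Strict Implicit. Unset Printing Implicit Defensive.
Import Order.TTheory GRing.Theory Num.Theory.
Local Open Scope ring_scope.

(* E = countable-dimensional F-vector space with basis (e_n); we realise it as
   {poly F}, e_n = 'X^n, so that the coefficient of e_n in x is x`_n. *)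
Section Defs.
Variable F : fieldType.
Notation E := {poly F}.

(* min supp x and max supp x (meaningful for x != 0) *)
Definition supp_min (x : E) : nat := find (fun a => a != 0) (x : seq F).
Definition supp_max (x : E) : nat := (size x).-1.

(* a (set-theoretic) subset of E; subspaces are represented this way *)
Definition subset_E := E -> Prop.
Definition sub_le (X Y : subset_E) : Prop := forall x, X x -> Y x.

Definition tail_of (X : subset_E) (k : nat) : subset_E :=
  fun x => X x /\ x != 0 /\ (k < supp_min x)%N.

Definition is_block (z : nat -> E) : Prop :=
  forall n, z n != 0 /\ (supp_max (z n) < supp_min (z n.+1))%N.

Definition is_fblock (s : seq E) : Prop :=
  all (fun a => a != 0) s /\ sorted (fun a b => supp_max a < supp_min b)%N s.

Definition span_of (z : nat -> E) : subset_E :=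
  fun x => exists (n : nat) (c : nat -> F), x = \sum_(i < n) c i *: z i.

(* "subspace" = infinite-dimensional block subspace *)
Definition is_subspace (X : subset_E) : Prop :=
  exists z, is_block z /\ forall x, X x <-> span_of z x.

Definition is_rule (V : subset_E) (v : seq E) (T : seq E -> Prop) : Prop :=
  [/\ (forall s, T s -> is_fblock s),
      T v,
      (forall y, T y -> odd (size y) ->
         forall Z, is_subspace Z -> sub_le Z V -> exists z, Z z /\ T (rcons y z))
    & (forall y, T y -> ~~ odd (size y) ->
         exists n : nat, forall z, tail_of V n z -> T (rcons y z))].

(* outcome of a play: v followed by a0, b0, a1, b1, ... *)
Definition outcome (v : seq E) (a b : nat -> E) : nat -> E :=
  fun k => if (k < size v)%N then nth 0 v k
           else let j := (k - size v)%N in if odd j then b j./2 else a j./2.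

Definition prefix (out : nat -> E) (m : nat) : seq E := mkseq out m.

(* ---- the game B^T_W(v), |v| even ----
   round k: II plays y_{k-1} in W[n_{k-1}] (if k >= 1) and Z_k subset W;
            I plays x_k in Z_k \ {0} and n_k.
   A strategy of I: sigma (y_0..y_{k-1}) (Z_0..Z_k) = (x_k, n_k). *)
Definition I_wins_even (W : subset_E) (v : seq E) (T : seq E -> Prop)
  (A : (nat -> E) -> Prop) (sigma : seq E -> seq subset_E -> E * nat) : Prop :=
  forall (y : nat -> E) (Z : nat -> subset_E),
    let x := fun k => (sigma (mkseq y k) (mkseq Z k.+1)).1 in
    let n := fun k => (sigma (mkseq y k) (mkseq Z k.+1)).2 in
    let out := outcome v x y in
    let II_legal := fun k =>
      is_subspace (Z k) /\ sub_le (Z k) W /\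
      (forall j, k = j.+1 ->
         tail_of W (n j) (y j) /\ T (prefix out (size v + 2 * j + 2))) in
    let I_legal := fun k =>
      Z k (x k) /\ x k != 0 /\ T (prefix out (size v + 2 * k + 1)) in
    (forall k, (forall i, (i <= k)%N -> II_legal i) -> I_legal k) /\
    ((forall k, II_legal k) -> A out).

(* ---- the game B^T_W(v), |v| odd ----
   I plays n_0; round k: II plays y_k in W[n_k] and Z_k subset W;
   I plays x_k in Z_k \ {0} and n_{k+1}.
   A strategy of I: n_0 together with
   sigma (y_0..y_k) (Z_0..Z_k) = (x_k, n_{k+1}). *)
Definition I_wins_odd (W : subset_E) (v : seq E) (T : seq E -> Prop)
  (A : (nat -> E) -> Prop) (n0 : nat)
  (sigma : seq E -> seq subset_E -> E * nat) : Prop :=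
  forall (y : nat -> E) (Z : nat -> subset_E),
    let x := fun k => (sigma (mkseq y k.+1) (mkseq Z k.+1)).1 in
    let n := fun k => match k with
                      | 0 => n0
                      | j.+1 => (sigma (mkseq y j.+1) (mkseq Z j.+1)).2 end in
    let out := outcome v y x in
    let II_legal := fun k =>
      is_subspace (Z k) /\ sub_le (Z k) W /\
      tail_of W (n k) (y k) /\ T (prefix out (size v + 2 * k + 1)) in
    let I_legal := fun k =>
      Z k (x k) /\ x k != 0 /\ T (prefix out (size v + 2 * k + 2)) in
    (forall k, (forall i, (i <= k)%N -> II_legal i) -> I_legal k) /\
    ((forall k, II_legal k) -> A out).

Definition I_has_strategy (W : subset_E) (v : seq E) (T : seq E -> Prop)
  (A : (nat -> E) -> Prop) : Prop :=
  if odd (size v) then exists n0 sigma, I_wins_odd W v T A n0 sigma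
  else exists sigma, I_wins_even W v T A sigma.

End Defs.

(* Main.v *)
Require Import Defs.
From HB Require Import structures.
From mathcomp Require Import all_boot all_order all_algebra zify.
From Stdlib Require Import Classical ClassicalEpsilon FunctionalExtensionality.
Set Implicit Arguments. Unset Strict Implicit. Unset Printing Implicit Defensive.
Import Order.TTheory GRing.Theory Num.Theory.
Local Open Scope ring_scope.

Section Vec.
Variable F : countFieldType.
Notation E := {poly F}.
Implicit Types (x y : E) (z : nat -> E) (W : subset_E F).

Lemma coef_lt_suppmin x p : (p < supp_min x)%N -> x`_p = 0.
Proof. by move=> H; apply/eqP; move: (before_find 0 H); rewrite /= => /negbFE. Qed.

Lemma coef_suppmin x : x != 0 -> x`_(supp_min x) != 0.
Proof.
move=> nx; rewrite /supp_min; apply: (@nth_find _ 0 (fun a => a != 0)).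
apply/hasP; exists (lead_coef x); last by rewrite lead_coef_eq0.
rewrite lead_coefE; apply: mem_nth.
by rewrite prednK // lt0n size_poly_eq0.
Qed.

Lemma coef_gt_suppmax x p : (supp_max x < p)%N -> x`_p = 0.
Proof. by rewrite /supp_max => H; apply: nth_default; case: (size x) H. Qed.

Lemma suppmin_le_max x : x != 0 -> (supp_min x <= supp_max x)%N.
Proof.
move=> nx; have := coef_suppmin nx; rewrite /supp_max.
case: leqP => // H; rewrite coef_gt_suppmax ?eqxx //.
Qed.

Lemma suppmin_gt x m : x != 0 -> (forall q, (q <= m)%N -> x`_q = 0) -> (m < supp_min x)%N.
Proof.
move=> nx H; case: leqP => // Hle; have := coef_suppmin nx.
by rewrite H ?eqxx.
Qed.

Lemma block_mono z : is_block z -> forall i j, (i < j)%N -> (supp_max (z i) < supp_min (z j))%N.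
Proof.
move=> bz i j; elim: j => // j IH; rewrite ltnS leq_eqVlt => /orP [/eqP <-|lt].
  by case: (bz i).
apply: leq_trans (IH lt) _; apply: leq_trans (suppmin_le_max (proj1 (bz j))) _.
by case: (bz j) => _ /ltnW.
Qed.

Lemma block_ge z : is_block z -> forall k, (k <= supp_min (z k))%N.
Proof.
move=> bz; elim=> // k IH; apply: leq_ltn_trans IH _.
apply: leq_ltn_trans (suppmin_le_max (proj1 (bz k))) _; by case: (bz k).
Qed.

Lemma comb_coef z n (c : nat -> F) j : is_block z -> (j < n)%N ->
  (\sum_(i < n) c i *: z i)`_(supp_min (z j)) = c j * (z j)`_(supp_min (z j)).
Proof.
move=> bz jn; rewrite coef_sum (bigD1 (Ordinal jn)) //= coefZ big1 ?addr0 //.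
move=> i /eqP neq; rewrite coefZ.
have : nat_of_ord i != j by apply/eqP => e; apply: neq; apply: val_inj.
rewrite neq_ltn => /orP [lt|lt].
  by rewrite coef_gt_suppmax ?mulr0 //; apply: block_mono.
rewrite coef_lt_suppmin ?mulr0 //; apply: leq_ltn_trans (suppmin_le_max (proj1 (bz j))) _.
exact: block_mono.
Qed.

Lemma span_widen z n N (c : nat -> F) : (n <= N)%N ->
  \sum_(i < n) c i *: z i = \sum_(i < N) (if (i < n)%N then c i else 0) *: z i.
Proof.
move=> le; rewrite (big_ord_widen N (fun i => c i *: z i) le) big_mkcond.
by apply: eq_bigr => i _; case: ifP => //; rewrite scale0r.
Qed.

Lemma span0 z : span_of z 0.
Proof. by exists 0%N, (fun _ => 0); rewrite big_ord0. Qed.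

Lemma spanD z x y : span_of z x -> span_of z y -> span_of z (x + y).
Proof.
move=> [n1 [c1 ->]] [n2 [c2 ->]].
rewrite (span_widen _ _ (leq_maxl n1 n2)) (span_widen _ _ (leq_maxr n1 n2)).
exists (maxn n1 n2), (fun i => (if (i < n1)%N then c1 i else 0) + (if (i < n2)%N then c2 i else 0)).
by rewrite -big_split /=; apply: eq_bigr => i _; rewrite scalerDl.
Qed.

Lemma spanZ z a x : span_of z x -> span_of z (a *: x).
Proof.
move=> [n [c ->]]; exists n, (fun i => a * c i).
by rewrite scaler_sumr; apply: eq_bigr => i _; rewrite scalerA.
Qed.

Lemma span_gen z k : span_of z (z k).
Proof.
exists k.+1, (fun i => if i == k then 1 else 0).
rewrite big_ord_recr /= eqxx scale1r big1 ?add0r // => i _.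
by rewrite (ltn_eqF (ltn_ord i)) scale0r.
Qed.

Lemma span_sum z n (f : nat -> E) : (forall i, (i < n)%N -> span_of z (f i)) ->
  span_of z (\sum_(i < n) f i).
Proof.
move=> H; apply: (big_ind (span_of z)); [exact: span0| exact: spanD|].
by move=> i _; apply: H.
Qed.

Lemma span_shift z K x : span_of (fun i => z (i + K)%N) x -> span_of z x.
Proof.
move=> [n [c ->]]; exists (K + n)%N, (fun j => if (K <= j)%N then c (j - K)%N else 0).
rewrite big_split_ord /= [X in _ = X + _]big1 ?add0r.
  by apply: eq_bigr => i _; rewrite leq_addr addKn addnC.
by move=> i _; rewrite leqNgt ltn_ord scale0r.
Qed.

Lemma sub0 W : is_subspace W -> W 0.
Proof. by move=> [z [_ H]]; apply/H/span0. Qed.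

Lemma sub_sum W n (f : nat -> E) : is_subspace W -> (forall i, (i < n)%N -> W (f i)) ->
  W (\sum_(i < n) f i).
Proof. move=> [z [_ H]] Hf; apply/H/span_sum => i lt; exact/H/Hf. Qed.

Lemma subZ W a x : is_subspace W -> W x -> W (a *: x).
Proof. by move=> [z [_ H]] /H Hx; apply/H/spanZ. Qed.

Lemma sub_far W m : is_subspace W -> exists d, W d /\ d != 0 /\ (m < supp_min d)%N.
Proof.
move=> [z [bz H]]; exists (z m.+1); split; first exact/H/span_gen.
split; first by case: (bz m.+1).
exact: block_ge.
Qed.

End Vec.

Section Games.
Variable F : countFieldType.
Notation E := {poly F}.
Variable T : seq E -> Prop.
Variable A : (nat -> E) -> Prop.
Implicit Types (x y : nat -> E) (W : subset_E F) (Z : nat -> subset_E F) (u : seq E).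

Definition IIo W u x (n : nat -> nat) y Z k :=
  is_subspace (Z k) /\ sub_le (Z k) W /\ tail_of W (n k) (y k) /\
  T (Defs.prefix (outcome u y x) (size u + 2 * k + 1)%N).
Definition Io u x y Z k :=
  Z k (x k) /\ x k != 0 /\ T (Defs.prefix (outcome u y x) (size u + 2 * k + 2)%N).
Definition wino W u x n y Z :=
  (forall k, (forall i, (i <= k)%N -> IIo W u x n y Z i) -> Io u x y Z k) /\
  ((forall k, IIo W u x n y Z k) -> A (outcome u y x)).

Definition IIe W u x (n : nat -> nat) y Z k :=
  is_subspace (Z k) /\ sub_le (Z k) W /\
  (forall j, k = j.+1 -> tail_of W (n j) (y j) /\
      T (Defs.prefix (outcome u x y) (size u + 2 * j + 2)%N)).
Definition Ie u x y Z k :=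
  Z k (x k) /\ x k != 0 /\ T (Defs.prefix (outcome u x y) (size u + 2 * k + 1)%N).
Definition wine W u x n y Z :=
  (forall k, (forall i, (i <= k)%N -> IIe W u x n y Z i) -> Ie u x y Z k) /\
  ((forall k, IIe W u x n y Z k) -> A (outcome u x y)).

Lemma I_wins_evenE W u sig : I_wins_even W u T A sig <->
  forall y Z, wine W u (fun k => (sig (mkseq y k) (mkseq Z k.+1)).1)
                        (fun k => (sig (mkseq y k) (mkseq Z k.+1)).2) y Z.
Proof. by split=> H y Z; exact: H. Qed.

Lemma I_wins_oddE W u n0 sig : I_wins_odd W u T A n0 sig <->
  forall y Z, wino W u (fun k => (sig (mkseq y k.+1) (mkseq Z k.+1)).1)
     (fun k => match k with 0 => n0 | j.+1 => (sig (mkseq y j.+1) (mkseq Z j.+1)).2 end) y Z.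
Proof. by split=> H y Z; exact: H. Qed.

End Games.

Section Shrink.
Variable F : countFieldType.
Notation E := {poly F}.
Implicit Types (W : subset_E F).

Lemma basis_ex W : exists z : nat -> E, is_subspace W -> is_block z /\ forall x, W x <-> span_of z x.
Proof.
case: (classic (is_subspace W)) => [[z Hz]|nW]; first by exists z.
by exists (fun _ => 0) => /nW.
Qed.

Definition basis W := proj1_sig (constructive_indefinite_description _ (basis_ex W)).
Lemma basisP W : is_subspace W -> is_block (basis W) /\ forall x, W x <-> span_of (basis W) x.
Proof. exact: (proj2_sig (constructive_indefinite_description _ (basis_ex W))). Qed.

Definition shrink W (m : nat) : subset_E F := span_of (fun i => basis W (i + m.+1)%N).

Lemma shrink_sub W m : is_subspace W -> is_subspace (shrink W m).
Proof.
move=> /basisP [bz _]; exists (fun i => basis W (i + m.+1)%N); split; last by [].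
by move=> i; rewrite addSn; apply: bz.
Qed.

Lemma shrink_le W m : is_subspace W -> sub_le (shrink W m) W.
Proof. by move=> /basisP [_ H] x /span_shift /H. Qed.

Lemma shrink_far W m x : is_subspace W -> shrink W m x -> x != 0 -> (m < supp_min x)%N.
Proof.
move=> /basisP [bz _] [n [c ->]] nx; apply: suppmin_gt => // q qm.
rewrite coef_sum big1 // => i _; rewrite coefZ coef_lt_suppmin ?mulr0 //.
apply: leq_trans (block_ge bz _); rewrite addnS ltnS; exact: leq_trans qm (leq_addl _ _).
Qed.

End Shrink.

Section Transfer.
Variable F : countFieldType.
Notation E := {poly F}.
Variable T : seq E -> Prop.
Variable A : (nat -> E) -> Prop.
Implicit Types (x y : nat -> E) (W : subset_E F) (Z : nat -> subset_E F) (u : seq E).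

Definition near_sub W' W m := forall z, W' z -> z != 0 -> (m < supp_min z)%N -> W z.

Lemma shrink_in W W' m (Z : subset_E F) : is_subspace W -> near_sub W' W m -> is_subspace Z -> sub_le Z W' ->
  sub_le (shrink Z m) W.
Proof.
move=> sW H sZ ZW z zs; have [->|nz] := eqVneq z 0; first exact: sub0.
apply: H nz (shrink_far sZ zs nz); apply: ZW; exact: shrink_le zs.
Qed.

Lemma tail_in W W' m n z : near_sub W' W m -> tail_of W' (maxn n m) z -> tail_of W n z.
Proof.
move=> H [Wz [nz lt]]; split; last split => //.
  by apply: H => //; apply: leq_ltn_trans lt; apply: leq_maxr.
by apply: leq_ltn_trans lt; apply: leq_maxl.
Qed.

Lemma wino_transfer W W' m u x n y Z : is_subspace W -> near_sub W' W m ->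
  wino T A W u x n y (fun k => shrink (Z k) m) ->
  wino T A W' u x (fun k => maxn (n k) m) y Z.
Proof.
move=> sW H [H1 H2].
have L : forall k, IIo T W' u x (fun k => maxn (n k) m) y Z k ->
    IIo T W u x n y (fun k => shrink (Z k) m) k.
  move=> k [sZ [ZW [tl Tk]]]; split; first exact: shrink_sub.
  split; first exact: (shrink_in sW H sZ ZW).
  split => //; exact: tail_in tl.
split.
  move=> k Hk; have [Zx [nx Tx]] : Io T u x y (fun k => shrink (Z k) m) k.
    by apply: H1 => i ik; apply: L; apply: Hk.
  split => //; have [sZ _] := Hk k (leqnn k); exact: shrink_le Zx.
by move=> Hall; apply: H2 => k; apply: L.
Qed.

Lemma wine_transfer W W' m u x n y Z : is_subspace W -> near_sub W' W m ->
  wine T A W u x n y (fun k => shrink (Z k) m) ->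
  wine T A W' u x (fun k => maxn (n k) m) y Z.
Proof.
move=> sW H [H1 H2].
have L : forall k, IIe T W' u x (fun k => maxn (n k) m) y Z k ->
    IIe T W u x n y (fun k => shrink (Z k) m) k.
  move=> k [sZ [ZW Hj]]; split; first exact: shrink_sub.
  split; first exact: (shrink_in sW H sZ ZW).
  move=> j kj; have [tl Tj] := Hj j kj; split => //; exact: tail_in tl.
split.
  move=> k Hk; have [Zx [nx Tx]] : Ie T u x y (fun k => shrink (Z k) m) k.
    by apply: H1 => i ik; apply: L; apply: Hk.
  split => //; have [sZ _] := Hk k (leqnn k); exact: shrink_le Zx.
by move=> Hall; apply: H2 => k; apply: L.
Qed.

Lemma mkseq_map (G : Type) (f : subset_E F -> G) Z j :
  mkseq (fun k => f (Z k)) j = map f (mkseq Z j).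
Proof. by rewrite /mkseq -map_comp. Qed.

Lemma transfer W W' m u : is_subspace W -> near_sub W' W m ->
  I_has_strategy W u T A -> I_has_strategy W' u T A.
Proof.
move=> sW H; rewrite /I_has_strategy; case: ifP => _.
  move=> [n0 [sig /I_wins_oddE Hs]].
  exists (maxn n0 m), (fun ys Zs => ((sig ys (map (fun Z0 : subset_E F => shrink Z0 m) Zs)).1,
                                    maxn (sig ys (map (fun Z0 : subset_E F => shrink Z0 m) Zs)).2 m)).
  apply/I_wins_oddE => y Z.
  have := wino_transfer sW H (Hs y (fun k => shrink (Z k) m)).
  congr wino; apply: functional_extensionality => k.
    by cbv beta; rewrite -mkseq_map.
  by case: k => // k; cbv beta; rewrite -mkseq_map.
move=> [sig /I_wins_evenE Hs].
exists (fun ys Zs => ((sig ys (map (fun Z0 : subset_E F => shrink Z0 m) Zs)).1,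
                      maxn (sig ys (map (fun Z0 : subset_E F => shrink Z0 m) Zs)).2 m)).
apply/I_wins_evenE => y Z.
have := wine_transfer sW H (Hs y (fun k => shrink (Z k) m)).
by congr wine; apply: functional_extensionality => k; cbv beta; rewrite -mkseq_map.
Qed.

End Transfer.

Section Compose.
Variable F : countFieldType.
Notation E := {poly F}.
Variable T : seq E -> Prop.
Variable A : (nat -> E) -> Prop.
Implicit Types (x y : nat -> E) (W : subset_E F) (Z : nat -> subset_E F) (u : seq E).

Lemma outcome_shift u (a b : nat -> E) :
  outcome u a b = outcome (rcons u (a 0%N)) b (fun k => a k.+1).
Proof.
apply: functional_extensionality => p; rewrite /outcome size_rcons nth_rcons.
case: (ltnP p (size u)) => [lt|ge]; first by rewrite ltnS ltnW.
rewrite ltnS; case: (ltngtP p (size u)) ge => // [gt|->] _; last by rewrite subnn.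
have -> : (p - size u = (p - (size u).+1).+1)%N by rewrite subnS prednK // subn_gt0.
move: (p - (size u).+1)%N => j.
by rewrite /= uphalf_half; case: (odd j).
Qed.

Lemma prefix_out u (a b : nat -> E) : Defs.prefix (outcome u a b) (size u) = u.
Proof.
apply: (@eq_from_nth _ 0); first by rewrite size_mkseq.
by move=> i; rewrite size_mkseq => lt; rewrite nth_mkseq // /outcome lt.
Qed.

Lemma mkseq_cons (G : Type) (f : nat -> G) n : mkseq f n.+1 = f 0%N :: mkseq (fun i => f i.+1) n.
Proof. by rewrite /mkseq /= (iotaDl 1 0) -map_comp. Qed.

End Compose.

Section Compose2.
Variable F : countFieldType.
Notation E := {poly F}.
Variable T : seq E -> Prop.
Variable A : (nat -> E) -> Prop.
Implicit Types (x y : nat -> E) (W : subset_E F) (Z : nat -> subset_E F) (u : seq E).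

Lemma wine_compose D v a0 xo n y Z :
  (IIe T D v (fun k => if k is j.+1 then xo j else a0) n y Z 0 ->
      Z 0%N a0 /\ a0 != 0 /\ T (rcons v a0)) ->
  (IIe T D v (fun k => if k is j.+1 then xo j else a0) n y Z 0 ->
      wino T A D (rcons v a0) xo n y (fun j => Z j.+1)) ->
  wine T A D v (fun k => if k is j.+1 then xo j else a0) n y Z.
Proof.
set xe := fun k => _.
move=> H1 H2.
have Eo : outcome v xe y = outcome (rcons v a0) y xo := outcome_shift v xe y.
have L : forall j, IIe T D v xe n y Z j.+1 -> IIo T D (rcons v a0) xo n y (fun j => Z j.+1) j.
  move=> j [sZ [ZW Hj]]; have [tl Tj] := Hj j erefl.
  split => //; split => //; split => //.
  have e : (size (rcons v a0) + 2 * j + 1 = size v + 2 * j + 2)%N by rewrite size_rcons; lia.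
  by rewrite e -Eo.
split.
  case=> [|j] Hk.
    have [Zx [nx Tx]] := H1 (Hk 0%N (leqnn 0)); split => //; split => //.
    have e : (size v + 2 * 0 + 1 = size (rcons v a0))%N by rewrite size_rcons; lia.
    by rewrite e Eo prefix_out.
  have [W1 _] := H2 (Hk 0%N isT).
  have [Zx [nx Tx]] := W1 j (fun i ij => L i (Hk i.+1 ij)).
  split => //; split => //.
  have e : (size v + 2 * j.+1 + 1 = size (rcons v a0) + 2 * j + 2)%N by rewrite size_rcons; lia.
  by rewrite e Eo.
move=> Hall; have [_ W2] := H2 (Hall 0%N).
by rewrite Eo; apply: W2 => j; apply: L.
Qed.

Lemma wino_compose Y v xo ne y Z :
  (IIo T Y v xo (fun k => if k is j.+1 then ne j else 0%N) y Z 0 ->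
     wine T A Y (rcons v (y 0%N)) xo ne (fun k => y k.+1) Z) ->
  wino T A Y v xo (fun k => if k is j.+1 then ne j else 0%N) y Z.
Proof.
set no := fun k => _.
move=> H.
have Eo : outcome v y xo = outcome (rcons v (y 0%N)) xo (fun k => y k.+1) := outcome_shift v y xo.
have L : forall k, IIo T Y v xo no y Z k -> IIe T Y (rcons v (y 0%N)) xo ne (fun k => y k.+1) Z k.
  move=> k [sZ [ZW [tl Tk]]]; split => //; split => // j kj; subst k.
  split => //.
  have e : (size (rcons v (y 0%N)) + 2 * j + 2 = size v + 2 * j.+1 + 1)%N by rewrite size_rcons; lia.
  by rewrite e -Eo.
split.
  move=> k Hk; have [W1 _] := H (Hk 0%N isT).
  have [Zx [nx Tx]] := W1 k (fun i ik => L i (Hk i ik)).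
  split => //; split => //.
  have e : (size v + 2 * k + 2 = size (rcons v (y 0%N)) + 2 * k + 1)%N by rewrite size_rcons; lia.
  by rewrite e Eo.
move=> Hall; have [_ W2] := H (Hall 0%N).
by rewrite Eo; apply: W2 => j; apply: L.
Qed.

End Compose2.

Section Compose3.
Variable F : countFieldType.
Notation E := {poly F}.
Variable T : seq E -> Prop.
Variable A : (nat -> E) -> Prop.
Notation strat := (seq E -> seq (subset_E F) -> E * nat).

Lemma compose_even (D : subset_E F) v : ~~ odd (size v) ->
  (forall Z, is_subspace Z -> sub_le Z D -> exists a, Z a /\ a != 0 /\ T (rcons v a) /\
      I_has_strategy D (rcons v a) T A) ->
  I_has_strategy D v T A.
Proof.
move=> ev H.
have px_ex : forall Z : subset_E F, exists a, is_subspace Z -> sub_le Z D ->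
    Z a /\ a != 0 /\ T (rcons v a) /\ I_has_strategy D (rcons v a) T A.
  move=> Z; case: (classic (is_subspace Z /\ sub_le Z D)) => [[sZ ZD]|nZ].
    by have [a Ha] := H Z sZ ZD; exists a.
  by exists 0 => sZ ZD; case: nZ.
pose px Z := proj1_sig (constructive_indefinite_description _ (px_ex Z)).
have pxP : forall Z, is_subspace Z -> sub_le Z D ->
    Z (px Z) /\ px Z != 0 /\ T (rcons v (px Z)) /\ I_has_strategy D (rcons v (px Z)) T A.
  by move=> Z; exact: (proj2_sig (constructive_indefinite_description _ (px_ex Z))).
have st_ex : forall a : E, exists p : nat * strat,
    I_has_strategy D (rcons v a) T A -> I_wins_odd D (rcons v a) T A p.1 p.2.
  move=> a; case: (classic (I_has_strategy D (rcons v a) T A)) => [Hs|nS].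
    move: Hs; rewrite /I_has_strategy size_rcons /= ev => -[n0 [sig Hs]].
    by exists (n0, sig).
  by exists (0%N, fun _ _ => (0, 0%N)).
pose st a := proj1_sig (constructive_indefinite_description _ (st_ex a)).
have stP : forall a, I_has_strategy D (rcons v a) T A -> I_wins_odd D (rcons v a) T A (st a).1 (st a).2.
  by move=> a; exact: (proj2_sig (constructive_indefinite_description _ (st_ex a))).
pose sigma : strat := fun ys Zs => match Zs with
  | [::] => (0, 0%N)
  | Z0 :: Zr => if ys is [::] then (px Z0, (st (px Z0)).1) else (st (px Z0)).2 ys Zr end.
rewrite /I_has_strategy (negbTE ev); exists sigma; apply/I_wins_evenE => y Z.
set a0 := px (Z 0%N).
have sS : forall j, sigma (mkseq y j.+1) (mkseq Z j.+2) =
    (st a0).2 (mkseq y j.+1) (mkseq (fun i => Z i.+1) j.+1).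
  move=> j; rewrite (mkseq_cons Z) /sigma -/a0.
  by rewrite (mkseq_cons y).
pose xo := fun j => ((st a0).2 (mkseq y j.+1) (mkseq (fun i => Z i.+1) j.+1)).1.
pose n := fun k => match k with 0 => (st a0).1
   | j.+1 => ((st a0).2 (mkseq y j.+1) (mkseq (fun i => Z i.+1) j.+1)).2 end.
have : wine T A D v (fun k => if k is j.+1 then xo j else a0) n y Z.
  apply: wine_compose.
    by move=> [sZ [ZD _]]; have [? [? [? _]]] := pxP _ sZ ZD.
  move=> [sZ [ZD _]]; have [_ [_ [_ Hs]]] := pxP _ sZ ZD.
  by move/I_wins_oddE: (stP _ Hs) => /(_ y (fun i => Z i.+1)).
congr wine; apply: functional_extensionality; case=> [|j] //.
  by rewrite /xo sS.
by rewrite /n sS.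
Qed.

Lemma compose_odd (Y : subset_E F) v : odd (size v) ->
  (forall a, Y a -> a != 0 -> T (rcons v a) -> I_has_strategy Y (rcons v a) T A) ->
  I_has_strategy Y v T A.
Proof.
move=> od H.
have se_ex : forall a : E, exists s : strat,
    I_has_strategy Y (rcons v a) T A -> I_wins_even Y (rcons v a) T A s.
  move=> a; case: (classic (I_has_strategy Y (rcons v a) T A)) => [Hs|nS].
    move: Hs; rewrite /I_has_strategy size_rcons /= od /= => -[sig Hs].
    by exists sig.
  by exists (fun _ _ => (0, 0%N)).
pose se a := proj1_sig (constructive_indefinite_description _ (se_ex a)).
have seP : forall a, I_has_strategy Y (rcons v a) T A -> I_wins_even Y (rcons v a) T A (se a).
  by move=> a; exact: (proj2_sig (constructive_indefinite_description _ (se_ex a))).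
pose sigma : strat := fun ys Zs => if ys is y0 :: yr then se y0 yr Zs else (0, 0%N).
rewrite /I_has_strategy od; exists 0%N, sigma; apply/I_wins_oddE => y Z.
pose xo := fun k => (se (y 0%N) (mkseq (fun i => y i.+1) k) (mkseq Z k.+1)).1.
pose ne := fun k => (se (y 0%N) (mkseq (fun i => y i.+1) k) (mkseq Z k.+1)).2.
have : wino T A Y v xo (fun k => if k is j.+1 then ne j else 0%N) y Z.
  apply: wino_compose => -[sZ [ZY [[Yy [ny _]] Ty]]].
  have e : (size v + 2 * 0 + 1 = size (rcons v (y 0%N)))%N by rewrite size_rcons; lia.
  move: Ty; rewrite e (outcome_shift v y xo) prefix_out => Ty.
  by move/I_wins_evenE: (seP _ (H _ Yy ny Ty)) => /(_ (fun i => y i.+1) Z).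
congr wino; apply: functional_extensionality => k.
  by rewrite /xo /sigma (mkseq_cons y).
by case: k => // k; rewrite /ne /sigma (mkseq_cons y).
Qed.

End Compose3.

Section Diag.
Variable F : countFieldType.
Notation E := {poly F}.
Variable T : seq E -> Prop.
Variable A : (nat -> E) -> Prop.
Variable v : seq E.
Variable V' : subset_E F.
Hypothesis sV' : is_subspace V'.

Definition xk (k : nat) : E := odflt 0 (unpickle k).
Definition Win (W : subset_E F) (a : E) := I_has_strategy W (rcons v a) T A.

Lemma step_ex (U : subset_E F) k : exists W : subset_E F, is_subspace U ->
  is_subspace W /\ sub_le W U /\
  ((exists W', is_subspace W' /\ sub_le W' U /\ Win W' (xk k)) -> Win W (xk k)).
Proof.
case: (classic (exists W', is_subspace W' /\ sub_le W' U /\ Win W' (xk k))) => [[W' [s [l w]]]|nE].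
  by exists W' => _; split => //; split => // _.
by exists U => sU; split => //; split => // e; case: nE.
Qed.

Definition step U k := proj1_sig (constructive_indefinite_description _ (step_ex U k)).
Lemma stepP U k : is_subspace U ->
  is_subspace (step U k) /\ sub_le (step U k) U /\
  ((exists W', is_subspace W' /\ sub_le W' U /\ Win W' (xk k)) -> Win (step U k) (xk k)).
Proof. exact: (proj2_sig (constructive_indefinite_description _ (step_ex U k))). Qed.

Fixpoint Ws k := match k with 0 => V' | k'.+1 => step (Ws k') k' end.

Lemma Ws_sub k : is_subspace (Ws k).
Proof. by elim: k => //= k IH; case: (stepP k IH). Qed.

Lemma Ws_le i j : (i <= j)%N -> sub_le (Ws j) (Ws i).
Proof.
elim: j => [|j IH]; first by rewrite leqn0 => /eqP -> x.
rewrite leq_eqVlt => /orP [/eqP -> //|]; rewrite ltnS => /IH H x Hx.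
apply: H; by case: (stepP j (Ws_sub j)) => _ [+ _]; apply.
Qed.

Lemma far_ex (W : subset_E F) m : exists d : E, is_subspace W -> W d /\ d != 0 /\ (m < supp_min d)%N.
Proof.
case: (classic (is_subspace W)) => [sW|nW]; last by exists 0.
by have [d Hd] := sub_far m sW; exists d.
Qed.
Definition far W m := proj1_sig (constructive_indefinite_description _ (far_ex W m)).
Lemma farP W m : is_subspace W -> W (far W m) /\ far W m != 0 /\ (m < supp_min (far W m))%N.
Proof. exact: (proj2_sig (constructive_indefinite_description _ (far_ex W m))). Qed.

Fixpoint dd k := match k with 0 => far (Ws 1) 0 | k'.+1 => far (Ws k'.+2) (supp_max (dd k')) end.

Lemma dd_in k : Ws k.+1 (dd k) /\ dd k != 0.
Proof.
case: k => [|k] /=.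
  by case: (farP 0 (Ws_sub 1)) => a [b _].
by case: (farP (supp_max (dd k)) (Ws_sub k.+2)) => a [b _].
Qed.

Lemma dd_block : is_block dd.
Proof.
move=> k; split; first by case: (dd_in k).
by rewrite /=; case: (farP (supp_max (dd k)) (Ws_sub k.+2)) => _ [].
Qed.

Definition D : subset_E F := span_of dd.

Lemma D_sub : is_subspace D.
Proof. by exists dd; split => //; exact: dd_block. Qed.

Lemma D_tail k z : D z -> (forall j, (j < k)%N -> z`_(supp_min (dd j)) = 0) -> Ws k.+1 z.
Proof.
move=> [n [c ->]] H; apply: (sub_sum (f := fun i => c i *: dd i)); first exact: Ws_sub.
move=> i ilt; case: (ltnP i k) => [ik|ki].
  have := H i ik; rewrite comb_coef //; last exact: dd_block.
  move=> /eqP; rewrite mulf_eq0 => /orP [ci|cd].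
    by rewrite (eqP ci) scale0r; apply: sub0; exact: Ws_sub.
  by have [_ nd] := dd_in i; move: (coef_suppmin nd); rewrite cd.
apply: subZ; first exact: Ws_sub.
by apply: (@Ws_le k.+1 i.+1) => //; case: (dd_in i).
Qed.

Lemma D_le : sub_le D V'.
Proof. move=> z Dz; apply: (@Ws_le 0 1) => //; exact: (@D_tail 0). Qed.

Lemma D_near k : near_sub D (Ws k.+1) (supp_max (dd k)).
Proof.
move=> z Dz nz lt; apply: D_tail => // j jk; apply: coef_lt_suppmin.
apply: leq_ltn_trans lt; apply: leq_trans (suppmin_le_max (proj2 (dd_in j))) _.
apply: ltnW; apply: leq_trans (block_mono dd_block jk) _.
exact: suppmin_le_max (proj2 (dd_in k)).
Qed.

Lemma stab a W : is_subspace W -> sub_le W D -> Win W a -> Win D a.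
Proof.
move=> sW WD wW; set k := pickle a.
have ea : xk k = a by rewrite /xk /k pickleK.
set m := supp_max (dd k).
have sW'' : is_subspace (shrink W m) := shrink_sub m sW.
have W''le : sub_le (shrink W m) (Ws k).
  move=> z zs; have [->|nz] := eqVneq z 0; first by apply: sub0; exact: Ws_sub.
  apply: (@Ws_le k k.+1) => //.
  exact: (@D_near k z (WD z (shrink_le sW zs)) nz (shrink_far sW zs nz)).
have wW'' : Win (shrink W m) a.
  by apply: (@transfer _ _ _ _ _ 0 _ sW _ wW) => z zs _ _; exact: shrink_le zs.
have : Win (Ws k.+1) a.
  rewrite -ea; case: (stepP k (Ws_sub k)) => _ [_]; apply.
  by exists (shrink W m); rewrite ea.
by apply: transfer (Ws_sub k.+1) (@D_near k).
Qed.

End Diag.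

Theorem mainTheorem6 (F : countFieldType) (A : (nat -> {poly F}) -> Prop)
  (V : subset_E F) (v : seq {poly F}) (T : seq {poly F} -> Prop) :
  is_subspace V -> is_fblock v -> is_rule V v T ->
  (forall W, is_subspace W -> sub_le W V -> ~ I_has_strategy W v T A) ->
  (odd (size v) ->
     exists X, is_subspace X /\ sub_le X V /\
       forall Y, is_subspace Y -> sub_le Y X ->
         exists x, Y x /\ T (rcons v x) /\
           forall W, is_subspace W -> sub_le W X ->
             ~ I_has_strategy W (rcons v x) T A) /\
  (~~ odd (size v) ->
     exists X, is_subspace X /\ sub_le X V /\
       (forall x, X x -> x != 0%R -> T (rcons v x)) /\
       forall x, X x -> x != 0%R ->
         forall W, is_subspace W -> sub_le W X ->
           ~ I_has_strategy W (rcons v x) T A).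
Proof.
move=> sV fv [Tfb Tv Todd Tev] Hno; split.
  move=> od.
  have sD := D_sub T A v sV.
  have DV : sub_le (D T A v V) V := D_le sV.
  exists (D T A v V); split => //; split => //.
  move=> Y sY YD; apply: NNPP => nx.
  apply: (Hno Y sY (fun z Yz => DV z (YD z Yz))).

  apply: (@compose_odd F T A Y v od) => a Ya na Ta; apply: NNPP => nS.
  apply: nx; exists a; split => //; split => // W sW WD wW.
  apply: nS; apply: (@transfer _ _ _ _ _ 0 _ sD) (stab sV sW WD wW).
  by move=> z Yz _ _; exact: YD.
move=> ev; have [n Hn] := Tev v Tv ev.
have sV' : is_subspace (shrink V n) := shrink_sub n sV.
have sD := D_sub T A v sV'.
have DV : sub_le (D T A v (shrink V n)) V.
  by move=> z Dz; apply: (shrink_le sV); exact: D_le sV' z Dz.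
have TD : forall x, D T A v (shrink V n) x -> x != 0 -> T (rcons v x).
  move=> x Dx nx; apply: Hn; split; first exact: DV.
  by split => //; apply: (shrink_far sV) nx; exact: D_le sV' x Dx.
apply: NNPP => nX; apply: (Hno _ sD DV).
apply: (@compose_even F T A _ v ev) => Z sZ ZD; apply: NNPP => nE.
apply: nX; exists Z; split => //; split; first by move=> z Zz; apply: DV; apply: ZD.
split; first by move=> x Zx nx; apply: TD => //; apply: ZD.
move=> x Zx nx W sW WZ wW; apply: nE; exists x; split => //; split => //; split.
  by apply: TD => //; apply: ZD.
by apply: (stab sV' sW) wW => z Wz; apply: ZD; apply: WZ.
Qed.
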